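(* Let $r_1,\dots,r_N$ be positive numbers. If $f\colon\mathbb{R}^n\to\mathbb{R}^{N\times N}$ is a continuous function of positive type such that (i) $f(x)_{ij}\le 0$ whenever $\|x\|\ge r_i+r_j$, and (ii) $f(x)_{ij}\le -1$ whenever $\|x\|=r_i+r_j$, then the average degree of the contact graph of any packing of balls in $\mathbb{R}^n$ all of whose radii belong to $\{r_1,\dots,r_N\}$ is at most $\max\{f(0)_{ii}: i=1,\dots,N\}$.
   Context: A continuous $f\colon\mathbb{R}^n\to\mathbb{R}^{N\times N}$ is of positive type if for every finite set $U\subseteq\mathbb{R}^n$ the block matrix $(f(x-y))_{x,y\in U}$ (of size $N|U|\times N|U|$) is positive semidefinite. A packing of balls is a finite set of closed balls with pairwise disjoint interiors; its contact graph has the balls as vertices, two distinct balls adjacent iff they are tangent. The average degree of a graph $(V,E)$ is $2|E|/|V|$. *)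

(* Defs.v *)
(* classical reals. Points of R^n are lists of reals of length n. *)
From Stdlib Require Import Reals List.
Import ListNotations.
Open Scope R_scope.

Definition rsum (k : nat) (g : nat -> R) : R :=
  fold_right Rplus 0 (map g (seq 0 k)).

Definition vsub (u v : list R) : list R :=
  map (fun p => fst p - snd p) (combine u v).
Definition vzero (n : nat) : list R := repeat 0 n.
Definition vnorm (v : list R) : R :=
  sqrt (fold_right (fun a s => a * a + s) 0 v).

(* An N x N matrix-valued function on R^n: f x i j is the (i,j) entry,
   indices 0 <= i,j < N. *)

(* continuity of f : R^n -> R^{N x N} (entrywise, equivalently in any matrix norm) *)
Definition mat_continuous (n N : nat) (f : list R -> nat -> nat -> R) : Prop :=
  forall x, length x = n -> forall i j, (i < N)%nat -> (j < N)%nat ->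
  forall eps, 0 < eps -> exists delta, 0 < delta /\
    forall y, length y = n -> vnorm (vsub y x) < delta ->
      Rabs (f y i j - f x i j) < eps.

(* positive semidefiniteness of the block matrix (f(x-y))_{x,y in U},
   U = finite set of points given as a duplicate-free list:
   its quadratic form is nonnegative. *)
Definition positive_type (n N : nat) (f : list R -> nat -> nat -> R) : Prop :=
  forall U : list (list R),
    (forall x, In x U -> length x = n) -> NoDup U ->
    forall c : nat -> nat -> R,
      0 <= rsum (length U) (fun a => rsum (length U) (fun b =>
             rsum N (fun i => rsum N (fun j =>
               c a i * c b j * f (vsub (nth a U []) (nth b U [])) i j)))).

(* A ball is a pair (center, radius). *)
Definition ball : Type := (list R * R)%type.

Definition is_packing (n : nat) (P : list ball) : Prop :=
  NoDup P /\
  (forall B, In B P -> length (fst B) = n /\ 0 < snd B) /\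
  (forall a b, (a < length P)%nat -> (b < length P)%nat -> a <> b ->
     ~ exists y, length y = n /\
        vnorm (vsub y (fst (nth a P ([], 0)))) < snd (nth a P ([], 0)) /\
        vnorm (vsub y (fst (nth b P ([], 0)))) < snd (nth b P ([], 0))).

Definition tangent (B1 B2 : ball) : Prop :=
  vnorm (vsub (fst B1) (fst B2)) = snd B1 + snd B2.

Definition num_edges (P : list ball) : R :=
  rsum (length P) (fun a => rsum (length P) (fun b =>
    if Nat.ltb a b then
      (if Req_EM_T (vnorm (vsub (fst (nth a P ([], 0))) (fst (nth b P ([], 0)))))
                   (snd (nth a P ([], 0)) + snd (nth b P ([], 0)))
       then 1 else 0)
    else 0)).

Definition average_degree (P : list ball) : R :=
  2 * num_edges P / INR (length P).

(* max { g i : 0 <= i < N } for N >= 1 *)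
Definition max_upto (N : nat) (g : nat -> R) : R :=
  fold_right Rmax (g 0%nat) (map g (seq 0 N)).

(* Main.v *)
Require Import Defs.
From Stdlib Require Import Reals List Lra Lia ClassicalEpsilon.
Import ListNotations.
Open Scope R_scope.

Lemma rsum_S k g : rsum (S k) g = rsum k g + g k.
Proof. unfold rsum. rewrite seq_S, map_app, fold_right_app. simpl.
  generalize (g k); intro x. induction (map g (seq 0 k)); simpl; lra. Qed.
Lemma rsum_0 g : rsum 0 g = 0. Proof. reflexivity. Qed.
Lemma rsum_ext k g h : (forall i, (i < k)%nat -> g i = h i) -> rsum k g = rsum k h.
Proof. induction k; intros H; [reflexivity|]. rewrite !rsum_S, IHk, H; auto. Qed.
Lemma rsum_le k g h : (forall i, (i < k)%nat -> g i <= h i) -> rsum k g <= rsum k h.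
Proof. induction k; intros H; [unfold rsum; simpl; lra|]. rewrite !rsum_S.
  assert (rsum k g <= rsum k h) by (apply IHk; intros; apply H; lia). assert (g k <= h k) by (apply H; lia). lra. Qed.
Lemma rsum_plus k g h : rsum k (fun i => g i + h i) = rsum k g + rsum k h.
Proof. induction k; [unfold rsum; simpl; lra|]. rewrite !rsum_S, IHk. lra. Qed.
Lemma rsum_opp k g : rsum k (fun i => - g i) = - rsum k g.
Proof. induction k; [unfold rsum; simpl; lra|]. rewrite !rsum_S, IHk. lra. Qed.
Lemma rsum_zero k : rsum k (fun _ => 0) = 0.
Proof. induction k; [reflexivity|]. rewrite rsum_S, IHk. lra. Qed.
Lemma rsum_delta k a x : (a < k)%nat -> rsum k (fun i => if Nat.eqb i a then x else 0) = x.
Proof. induction k; intros H; [lia|]. rewrite rsum_S.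
  destruct (Nat.eq_dec a k).
  - subst. rewrite Nat.eqb_refl. rewrite (rsum_ext _ _ (fun _ => 0)). rewrite rsum_zero; lra.
    intros i Hi. destruct (Nat.eqb_spec i k); [lia|auto].
  - rewrite IHk by lia. destruct (Nat.eqb_spec k a); [lia|lra]. Qed.
Lemma rsum_swap m k g : rsum m (fun a => rsum k (fun b => g a b)) = rsum k (fun b => rsum m (fun a => g a b)).
Proof. induction m. - rewrite rsum_0. symmetry. apply rsum_zero.
  - rewrite rsum_S, IHm, <- rsum_plus. apply rsum_ext. intros. rewrite rsum_S. reflexivity. Qed.
Lemma rsum_const k x : rsum k (fun _ => x) = INR k * x.
Proof. induction k; [unfold rsum; simpl; lra|]. rewrite rsum_S, IHk, S_INR. lra. Qed.

Definition ss (v : list R) := fold_right (fun a s => a * a + s) 0 v.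
Definition mix t (u v : list R) := map (fun p => fst p + t * (snd p - fst p)) (combine u v).

Lemma ss_nonneg v : 0 <= ss v. Proof. induction v; simpl; nra. Qed.
Lemma mix_1 t u v : length u = length v -> ss (vsub (mix t u v) u) = t * t * ss (vsub u v).
Proof. revert v; induction u; intros [|b v] H; simpl in *; try lra; try lia.
  unfold vsub, mix in *; simpl. rewrite IHu by lia. ring. Qed.
Lemma mix_2 t u v : length u = length v -> ss (vsub (mix t u v) v) = (1-t) * (1-t) * ss (vsub u v).
Proof. revert v; induction u; intros [|b v] H; simpl in *; try lra; try lia.
  unfold vsub, mix in *; simpl. rewrite IHu by lia. ring. Qed.
Lemma mix_len t u v : length u = length v -> length (mix t u v) = length u.
Proof. intros. unfold mix. rewrite length_map, length_combine. lia. Qed.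
Lemma vsub_len u v : length u = length v -> length (vsub u v) = length u.
Proof. intros. unfold vsub. rewrite length_map, length_combine. lia. Qed.
Lemma ss_sym u v : ss (vsub u v) = ss (vsub v u).
Proof. revert v; induction u; intros [|b v]; simpl; try reflexivity.
  unfold vsub in *; simpl. rewrite IHu. ring. Qed.
Lemma vsub_self u : vsub u u = repeat 0 (length u).
Proof. induction u; simpl; auto. unfold vsub in *; simpl. rewrite IHu. f_equal. ring. Qed.

Lemma norm_scale t S : 0 <= t -> 0 <= S -> sqrt (t * t * S) = t * sqrt S.
Proof. intros. rewrite sqrt_mult_alt by nra. rewrite sqrt_square; auto. Qed.

Lemma far n P a b : is_packing n P -> (a < length P)%nat -> (b < length P)%nat -> a <> b ->
  snd (nth a P ([],0)) + snd (nth b P ([],0)) <= vnorm (vsub (fst (nth a P ([],0))) (fst (nth b P ([],0)))).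
Proof.
  intros [_ [HB HD]] Ha Hb Hab.
  pose proof (HD a b Ha Hb Hab) as HD'. clear HD.
  pose proof (nth_In P ([],0) Ha) as IA. pose proof (nth_In P ([],0) Hb) as IB.
  destruct (nth a P ([],0)) as [xa ra]; destruct (nth b P ([],0)) as [xb rb]; simpl in *.
  destruct (HB _ IA) as [La Ra]. destruct (HB _ IB) as [Lb Rb]. simpl in *.
  destruct (Rle_or_lt (ra + rb) (vnorm (vsub xa xb))) as [h|h]; auto.
  exfalso. apply HD'.
  set (t := ra / (ra + rb)).
  assert (Ht : 0 <= t /\ t <= 1 /\ t * (ra+rb) = ra).
  { assert (E : t * (ra+rb) = ra) by (unfold t; field; apply Rgt_not_eq; lra).
    assert (0 <= t) by (unfold t; apply Rlt_le, Rdiv_lt_0_compat; lra). split; [lra|split; [|exact E]]. destruct (Rle_or_lt t 1) as [|Hlt]; auto. exfalso. assert ((t-1)*(ra+rb) > 0) by (apply Rmult_lt_0_compat; lra). lra. }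
  exists (mix t xa xb). split. rewrite mix_len; lia.
  unfold vnorm in *. fold (ss (vsub xa xb)) in h. fold (ss (vsub (mix t xa xb) xa)).
  fold (ss (vsub (mix t xa xb) xb)).
  rewrite mix_1, mix_2 by lia. rewrite !norm_scale by (apply ss_nonneg || lra).
  pose proof (sqrt_pos (ss (vsub xa xb))). split; nra.
Qed.
Lemma max_ge N g i : (i < N)%nat -> g i <= max_upto N g.
Proof. intros H. unfold max_upto. assert (I : In i (seq 0 N)) by (apply in_seq; lia).
  generalize (g 0%nat). induction (seq 0 N) as [|x l IH]; intros d; simpl in *; [contradiction|].
  destruct I as [->|I]; [apply Rmax_l|]. eapply Rle_trans; [apply IH; auto|apply Rmax_r]. Qed.

Lemma collapse2 N (F : nat -> nat -> R) p q : (p < N)%nat -> (q < N)%nat ->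
  rsum N (fun i => rsum N (fun j =>
    (if Nat.eqb i p then 1 else 0) * (if Nat.eqb j q then 1 else 0) * F i j)) = F p q.
Proof. intros Hp Hq.
  rewrite (rsum_ext _ _ (fun i => if Nat.eqb i p then F i q else 0)).
  - rewrite (rsum_ext _ _ (fun i => if Nat.eqb i p then F p q else 0)).
    apply rsum_delta; auto. intros i _. destruct (Nat.eqb_spec i p) as [->|]; auto.
  - intros i Hi. rewrite (rsum_ext _ _ (fun j => if Nat.eqb j q then
       (if Nat.eqb i p then 1 else 0) * F i q else 0)).
    + rewrite rsum_delta by auto. destruct (Nat.eqb i p); ring.
    + intros j Hj. destruct (Nat.eqb_spec j q) as [->|]; ring. Qed.

Theorem theorem4p1 (n N : nat) (r : nat -> R) (f : list R -> nat -> nat -> R) :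
  (1 <= N)%nat ->
  (forall i, (i < N)%nat -> 0 < r i) ->
  mat_continuous n N f ->
  positive_type n N f ->
  (forall x i j, length x = n -> (i < N)%nat -> (j < N)%nat ->
     r i + r j <= vnorm x -> f x i j <= 0) ->
  (forall x i j, length x = n -> (i < N)%nat -> (j < N)%nat ->
     vnorm x = r i + r j -> f x i j <= -1) ->
  forall P : list ball,
    is_packing n P ->
    (forall B, In B P -> exists i, (i < N)%nat /\ snd B = r i) ->
    average_degree P <= max_upto N (fun i => f (vzero n) i i).
Proof.
  intros HN Hr Hc Hpt Hi Hii P HP Hrad.
  set (M := max_upto N (fun i => f (vzero n) i i)).
  assert (HM0 : 0 <= M).
  { assert (H0 := Hpt [vzero n]).
    assert (L : forall x, In x [vzero n] -> length x = n).
    { intros x [<-|[]]. apply repeat_length. }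
    specialize (H0 L ltac:(constructor; [intros []|constructor]) (fun a i => if Nat.eqb i 0 then 1 else 0)).
    simpl length in H0. rewrite rsum_S, rsum_0, rsum_S, rsum_0 in H0. simpl nth in H0.
    rewrite collapse2 in H0 by lia.
    unfold vzero in H0. rewrite vsub_self, repeat_length in H0.
    eapply Rle_trans; [|apply (max_ge N (fun i => f (vzero n) i i) 0); lia]. unfold vzero. lra. }
  set (m := length P).
  assert (Hex : forall a, exists i, (a < m)%nat -> (i < N)%nat /\ snd (nth a P ([],0)) = r i).
  { intros a. destruct (Nat.lt_ge_cases a m) as [h|h].
    - destruct (Hrad _ (nth_In P ([],0) h)) as [i Hi']. exists i; auto.
    - exists 0%nat; intros; lia. }
  set (idx := fun a => proj1_sig (constructive_indefinite_description _ (Hex a))).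
  assert (Hidx : forall a, (a < m)%nat -> (idx a < N)%nat /\ snd (nth a P ([],0)) = r (idx a)).
  { intros a h. unfold idx. destruct (constructive_indefinite_description _ (Hex a)) as [i Hi']. simpl. auto. }
  destruct HP as [HPnd [HB HD]].
  set (U := map fst P).
  assert (HUlen : length U = m) by (unfold U; apply length_map).
  assert (HUn : forall a, nth a U [] = fst (nth a P ([],0))).
  { intros a. unfold U. change (@nil R) with (fst (@nil R, 0)). apply map_nth. }
  assert (HUl : forall x, In x U -> length x = n).
  { intros x Hx. unfold U in Hx. apply in_map_iff in Hx. destruct Hx as [B [<- HB']]. apply (HB B HB'). }
  assert (Hfar : forall a b, (a < m)%nat -> (b < m)%nat -> a <> b ->
     snd (nth a P ([],0)) + snd (nth b P ([],0)) <= vnorm (vsub (fst (nth a P ([],0))) (fst (nth b P ([],0))))).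
  { intros. apply (far n); auto. split; auto. }
  assert (HLa : forall a, (a < m)%nat -> length (fst (nth a P ([],0))) = n).
  { intros a h. apply (HB _ (nth_In P ([],0) h)). }
  assert (HUnd : NoDup U).
  { apply (NoDup_nth U []). rewrite HUlen. intros a b Ha Hb E.
    destruct (Nat.eq_dec a b); auto. exfalso.
    rewrite !HUn in E. pose proof (Hfar a b Ha Hb n0) as F. rewrite E in F.
    unfold vnorm in F. rewrite vsub_self in F.
    assert (ss (repeat 0 (length (fst (nth b P ([],0))))) = 0) as Z.
    { generalize (length (fst (nth b P ([],0)))) as k. intros k; induction k as [|k IHk]; [reflexivity|]. unfold ss in *. simpl. rewrite IHk. ring. }
    unfold ss in Z. rewrite Z, sqrt_0 in F.
    destruct (HB _ (nth_In P ([],0) Ha)). destruct (HB _ (nth_In P ([],0) Hb)). lra. }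
  specialize (Hpt U HUl HUnd (fun a i => if Nat.eqb i (idx a) then 1 else 0)).
  rewrite HUlen in Hpt.
  set (X := fun a => fst (nth a P ([],0))).
  set (Rd := fun a => snd (nth a P ([],0))).
  set (T := fun a b => if Nat.ltb a b then
      (if Req_EM_T (vnorm (vsub (X a) (X b))) (Rd a + Rd b) then 1 else 0) else 0).
  assert (HE : num_edges P = rsum m (fun a => rsum m (fun b => T a b))) by reflexivity.
  assert (Hbound : 0 <= rsum m (fun a => rsum m (fun b =>
     ((if Nat.eqb a b then M else 0) + - T a b) + - T b a))).
  { eapply Rle_trans; [apply Hpt|]. apply rsum_le; intros a Ha. apply rsum_le; intros b Hb.
    rewrite collapse2 by (apply Hidx; auto). rewrite !HUn.
    destruct (Hidx a Ha) as [Ia Ra]. destruct (Hidx b Hb) as [Ib Rb].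
    destruct (Nat.eq_dec a b) as [<-|Hab].
    - rewrite Nat.eqb_refl. unfold T. rewrite Nat.ltb_irrefl. rewrite vsub_self, HLa by auto.
      fold (vzero n). pose proof (max_ge N (fun i => f (vzero n) i i) (idx a) Ia). simpl in *. fold M in H. lra.
    - assert (Hn : (a =? b)%nat = false) by (apply Nat.eqb_neq; auto). rewrite Hn.
      assert (Hlen : length (vsub (fst (nth a P ([],0))) (fst (nth b P ([],0)))) = n).
      { rewrite vsub_len; rewrite ?HLa; auto. }
      pose proof (Hfar a b Ha Hb Hab) as F. rewrite Ra, Rb in F.
      assert (Hsym : vnorm (vsub (X b) (X a)) = vnorm (vsub (X a) (X b))).
      { unfold vnorm. fold (ss (vsub (X b) (X a))). fold (ss (vsub (X a) (X b))). rewrite ss_sym. auto. }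
      assert (G0 := Hi _ _ _ Hlen Ia Ib F).
      assert (G1 : vnorm (vsub (X a) (X b)) = Rd a + Rd b ->
                   f (vsub (fst (nth a P ([],0))) (fst (nth b P ([],0)))) (idx a) (idx b) <= -1).
      { intros E. apply Hii; auto. unfold X, Rd in E. rewrite E, Ra, Rb. auto. }
      unfold T. destruct (Nat.lt_ge_cases a b) as [h|h].
      + assert (h1 : (a <? b)%nat = true) by (apply Nat.ltb_lt; auto).
        assert (h2 : (b <? a)%nat = false) by (apply Nat.ltb_ge; lia).
        rewrite h1, h2. destruct Req_EM_T as [E|E]; [apply G1 in E|]; lra.
      + assert (h1 : (a <? b)%nat = false) by (apply Nat.ltb_ge; lia).
        assert (h2 : (b <? a)%nat = true) by (apply Nat.ltb_lt; lia).
        rewrite h1, h2. destruct Req_EM_T as [E|E].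
        * rewrite Hsym in E. assert (E' : vnorm (vsub (X a) (X b)) = Rd a + Rd b) by (unfold Rd in *; lra).
          apply G1 in E'. lra.
        * lra. }
  rewrite (rsum_ext _ _ (fun a => M + - rsum m (fun b => T a b) + - rsum m (fun b => T b a))) in Hbound.
  2:{ intros a Ha. rewrite !rsum_plus, !rsum_opp. f_equal. f_equal.
      rewrite (rsum_ext _ _ (fun b => if Nat.eqb b a then M else 0)).
      apply rsum_delta; auto. intros b _. destruct (Nat.eqb_spec a b), (Nat.eqb_spec b a); auto; lia. }
  rewrite !rsum_plus, !rsum_opp, rsum_const, (rsum_swap m m (fun b a => T a b)) in Hbound.
  unfold average_degree. rewrite HE. fold m.
  set (E := rsum m (fun a => rsum m (fun b => T a b))) in *.
  destruct (Nat.eq_dec m 0) as [Z|Z].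
  - unfold E. rewrite Z, rsum_0. unfold Rdiv. rewrite Rmult_0_r, Rmult_0_l. auto.
  - assert (0 < INR m) by (apply lt_0_INR; lia).
    apply (Rmult_le_reg_r (INR m)); auto. unfold Rdiv. rewrite Rmult_assoc, Rinv_l by lra. lra.
Qed.
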